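(* Let $\overline{g}$ be the standard metric on the unit sphere $S^n \subset \mathbb{R}^{n+1}$ and let $f = x_{n+1}|_{S^n}$. If $\delta > 0$ is sufficiently small, then the function $e^{-\frac{1}{f-\delta}}$ satisfies $\Delta_{\overline{g}}\big(e^{-\frac{1}{f-\delta}}\big) \geq 0$ in the region $\{\delta < f < 3\delta\}$. *)

(* Defs.v *)
From HB Require Import structures.
From mathcomp Require Import all_boot all_order all_algebra.
From mathcomp Require Import all_classical all_reals all_analysis.
Set Implicit Arguments. Unset Strict Implicit. Unset Printing Implicit Defensive.
Import Order.TTheory GRing.Theory Num.Theory.
Import numFieldNormedType.Exports.
Local Open Scope ring_scope.

Definition sqnorm (R : realType) (n : nat) (x : 'rV[R]_n) : R :=
  \sum_(i < n) x 0 i ^+ 2.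

Definition eucl_lap (R : realType) (n : nat) (F : 'rV[R]_n -> R) (x : 'rV[R]_n) : R :=
  \sum_(i < n) derive (fun y => derive F y (delta_mx 0 i)) x (delta_mx 0 i).

(* Laplace-Beltrami operator of the round metric on the unit sphere S^n in R^(n+1):
   for u : R^(n+1) -> R (only its values on S^n matter), Delta_{S^n} u at x in S^n
   is the Euclidean Laplacian at x of the degree-0 homogeneous extension
   y |-> u (y / |y|). *)
Definition sphere_lap (R : realType) (n : nat) (u : 'rV[R]_n.+1 -> R) (x : 'rV[R]_n.+1) : R :=
  eucl_lap (fun y => u ((Num.sqrt (sqnorm y))^-1 *: y)) x.

Definition xlast (R : realType) (n : nat) (x : 'rV[R]_n.+1) : R := x 0 ord_max.

(* Main.v *)
Require Import Defs.
From HB Require Import structures.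
From mathcomp Require Import all_boot all_order all_algebra.
From mathcomp Require Import all_classical all_reals all_analysis.
From mathcomp Require Import ring lra.
Import Order.TTheory GRing.Theory Num.Theory.
Module Helpers.
Import numFieldNormedType.Exports.
Local Open Scope ring_scope.
Local Open Scope classical_set_scope.
Section S.
Variable R : realType.
Implicit Types (f g : R -> R) (t a b : R).
Lemma dD f g t a b : is_derive t 1 f a -> is_derive t 1 g b ->
  is_derive t 1 (fun s => f s + g s) (a + b).
Proof. move=> Hf Hg; have H := @is_deriveD R R R f g t 1 a b Hf Hg.
have -> : (fun s => f s + g s) = (f + g) by [].
exact: H. Qed.
Lemma dM f g t a b : is_derive t 1 f a -> is_derive t 1 g b ->
  is_derive t 1 (fun s => f s * g s) (a * g t + f t * b).
Proof. move=> Hf Hg; have H := @is_deriveM R R f g t 1 a b Hf Hg.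
have -> : (fun s => f s * g s) = (f * g) by [].
apply: (is_derive_eq H).
by rewrite /GRing.scale /= addrC mulrC [f t * b]mulrC. Qed.
Lemma dV f t a : f t != 0 -> is_derive t 1 f a ->
  is_derive t 1 (fun s => (f s)^-1) (- a / (f t) ^+ 2).
Proof. move=> H Hf; have H2 := @is_deriveV R f t a 1 H Hf.
apply: (is_derive_eq H2).
rewrite /GRing.scale /= mulrC mulNr -mulrN; congr (_ * _); rewrite invrN ?opprK //. Qed.
Lemma dC f t a g b : is_derive (g t) 1 f a -> is_derive t 1 g b ->
  is_derive t 1 (fun s => f (g s)) (a * b).
Proof. move=> Hf Hg; exact: (is_derive1_comp Hf Hg). Qed.
Lemma dX t : is_derive t 1 (fun s : R => s) 1.
Proof. exact: is_derive_id. Qed.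
Lemma dK (k : R) t : is_derive t 1 (fun s : R => k) 0.
Proof. exact: is_derive_cst. Qed.
Lemma dE f t a : is_derive t 1 f a -> is_derive t 1 (fun s => expR (f s)) (expR (f t) * a).
Proof. move=> Hf; exact: dC. Qed.
Lemma dS f t a : 0 < f t -> is_derive t 1 f a ->
  is_derive t 1 (fun s => Num.sqrt (f s)) ((2 * Num.sqrt (f t))^-1 * a).
Proof. move=> H Hf; apply: dC => //; exact: is_derive1_sqrt. Qed.
Arguments dD {f g t a b}. Arguments dM {f g t a b}. Arguments dV {f t a}.
Arguments dC {f t a g b}. Arguments dE {f t a}. Arguments dS {f t a}.
Arguments dX {t}. Arguments dK {k t}.
Lemma dcont g t b : is_derive t 1 g b -> {for t, continuous g}.
Proof. move=> [Hd _]; apply: differentiable_continuous; exact/derivable1_diffP. Qed.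
Lemma near_comp g (t b : R) (P : R -> Prop) : is_derive t 1 g b ->
  (\forall y \near g t, P y) -> \forall s \near t, P (g s).
Proof. move=> /dcont gc HP; exact: gc _ HP. Qed.
Lemma D2 (psi psi1 : R -> R) (x d : R) : (\forall t \near (x : R), is_derive (t : R) 1 psi (psi1 t)) ->
  is_derive x 1 psi1 d -> derive (fun s => derive psi s 1) x 1 = d.
Proof.
move=> H1 H2; rewrite (@near_eq_derive _ _ _ _ psi1); first exact: derive_val.
by move: H1; apply: filterS => t Ht; exact: derive_val.
Qed.
Lemma chain2 f f1 g g1 (x f2 g2 : R) :
  (\forall t \near (x : R), is_derive (t:R) 1 g (g1 t)) -> is_derive x 1 g1 g2 ->
  (\forall y \near (g x : R), is_derive (y:R) 1 f (f1 y)) -> is_derive (g x) 1 f1 f2 ->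
  derive (fun s => derive (fun t => f (g t)) s 1) x 1
   = f2 * g1 x * g1 x + f1 (g x) * g2.
Proof.
move=> Hg Hg1 Hf Hf1.
have Hgx : is_derive x 1 g (g1 x) := nbhs_singleton Hg.
apply: (@D2 _ (fun t => f1 (g t) * g1 t)).
  have Hf' := @near_comp g x (g1 x) _ Hgx Hf.
  near=> t; apply: dC; [exact: (near Hf' t) | exact: (near Hg t)].
apply: (is_derive_eq (dM (dC Hf1 Hgx) Hg1)).
rewrite /=; ring.
Unshelve. all: by end_near. Qed.
Lemma red1 N (F : 'rV[R]_N -> R) (x v : 'rV[R]_N) (s : R) :
  derive F (s *: v + x) v = derive (fun t : R => F (t *: v + x)) s 1.
Proof.
rewrite /derive; congr lim.
suff E : (fun h : R => h^-1 *: ((F \o shift (s *: v + x)) (h *: v) - F (s *: v + x))) = (fun h : R => h^-1 *: (((fun t => F (t *: v + x)) \o shift s) h%:A - F (s *: v + x))) by rewrite E.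
apply/funext => k /=.
by rewrite scalerDl addrA -[k%:A]/(k *: 1) /GRing.scale /= mulr1.
Qed.
Lemma red N (F : 'rV[R]_N -> R) (x v : 'rV[R]_N) :
  derive (fun y => derive F y v) x v =
  derive (fun s : R => derive (fun t : R => F (t *: v + x)) s 1) 0 1.
Proof.
rewrite /derive; congr lim.
suff E : (fun h : R => h^-1 *: (((fun y => derive F y v) \o shift x) (h *: v) - derive F x v)) = (fun h : R => h^-1 *: (((fun s : R => derive (fun t : R => F (t *: v + x)) s 1) \o shift 0) h%:A - derive (fun t : R => F (t *: v + x)) 0 1)) by rewrite E.
apply/funext => k /=.
rewrite -!red1 scale0r add0r addr0 -[k%:A]/(k *: 1) /GRing.scale /= mulr1.
by [].
Qed.
Lemma dN f t a : is_derive t 1 f a -> is_derive t 1 (fun s => - f s) (- a).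
Proof. move=> Hf; have H := @is_deriveN R R R f t 1 a Hf.
have -> : (fun s => - f s) = (- f) by []. exact: H. Qed.
Arguments dN {f t a}.

Section Comp.
Variables (d a b c : R).
Hypothesis da : d < a.
Definition rr (t : R) := t * t + 2 * c * t + 1.
Definition SS t := Num.sqrt (rr t).
Definition gg t := (Num.sqrt (rr t))^-1 * (t * b + a).
Definition ff (y : R) := expR (- (y - d)^-1).
Definition ff1 (y : R) := expR (- (y - d)^-1) * ((y - d) * (y - d))^-1.
Definition gg1 t := b * (Num.sqrt (rr t))^-1 -
   ((t + c) * (t * b + a)) * ((Num.sqrt (rr t) * Num.sqrt (rr t)) * Num.sqrt (rr t))^-1.

Lemma drr t : is_derive t 1 rr (2 * t + 2 * c).
Proof.
have H := (dD (dD (dM (@dX t) (@dX t)) (dM (@dK (2 * c) t) (@dX t))) (@dK 1 t)).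
apply: (is_derive_eq H).
rewrite /=; ring.
Qed.
Lemma dSS t : 0 < rr t -> is_derive t 1 SS ((t + c) / SS t).
Proof.
move=> H; rewrite {1}/SS; apply: is_derive_eq; first exact: (dS H (drr t)).
have : SS t != 0 by rewrite /SS gt_eqF // sqrtr_gt0.
rewrite /SS => H1; field; exact: H1.
Qed.
Lemma ff_d y : d < y -> is_derive y 1 ff (ff1 y).
Proof.
move=> H; have H0 : y - d != 0 by rewrite subr_eq0 gt_eqF.
have H1 := dE (dN (@dV (fun s => s - d) y _ H0 (dD dX dK))).
rewrite /ff; apply: (is_derive_eq H1).
rewrite /ff1; field; exact: H0.
Qed.
Lemma rr0 : rr 0 = 1.
Proof. by rewrite /rr !mulr0 !add0r. Qed.
Lemma gg0 : gg 0 = a.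
Proof. by rewrite /gg rr0 sqrtr1 invr1 mul1r mul0r add0r. Qed.
Lemma gg10 : gg1 0 = b - c * a.
Proof. by rewrite /gg1 rr0 sqrtr1 !invr1 !mulr1 mul0r !add0r divr1. Qed.
Lemma dgg t : 0 < rr t -> is_derive t 1 gg (gg1 t).
Proof.
move=> H; have HS : Num.sqrt (rr t) != 0 by rewrite gt_eqF // sqrtr_gt0.
have H1 := dM (@dV (fun s => Num.sqrt (rr s)) t _ HS (dS H (drr t))) (dD (dM dX (@dK b t)) (@dK a t)).
rewrite /gg; apply: (is_derive_eq H1).
rewrite /gg1; field; exact: HS.
Qed.
Definition g2 := 3 * a * c ^+ 2 - a - 2 * b * c.
Lemma dgg1 : is_derive (0:R) 1 gg1 g2.
Proof.
have H : 0 < rr 0 by rewrite rr0.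
have HS : Num.sqrt (rr 0) != 0 by rewrite gt_eqF // sqrtr_gt0.
have Hs := dS H (drr 0).
have H3 : Num.sqrt (rr 0) * Num.sqrt (rr 0) * Num.sqrt (rr 0) != 0 by rewrite !mulf_neq0.
have H1 := dD (dM (@dK b 0) (@dV (fun s => Num.sqrt (rr s)) 0 _ HS Hs))
  (dN (dM (dM (dD dX (@dK c 0)) (dD (dM dX (@dK b 0)) (@dK a 0)))
     (@dV (fun s => Num.sqrt (rr s) * Num.sqrt (rr s) * Num.sqrt (rr s)) 0 _ H3 (dM (dM Hs Hs) Hs)))).
rewrite /gg1; apply: (is_derive_eq H1).
by rewrite /g2 rr0 sqrtr1 /=; field.
Qed.
Definition f2 := expR (- (a - d)^-1) * (1 - 2 * (a - d)) / (a - d) ^+ 4.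
Lemma dff1 : is_derive (a:R) 1 ff1 f2.
Proof.
have H0 : a - d != 0 by rewrite subr_eq0 gt_eqF.
have H2 : (a - d) * (a - d) != 0 by rewrite mulf_neq0.
have H1 := dM (dE (dN (@dV (fun s => s - d) a _ H0 (dD dX dK))))
   (@dV (fun s => (s - d) * (s - d)) a _ H2 (dM (dD dX dK) (dD dX dK))).
rewrite /ff1; apply: (is_derive_eq H1).
rewrite /f2; field; exact: H0.
Qed.
Lemma psi2 : derive (fun s => derive (fun t => ff (gg t)) s 1) 0 1 =
  f2 * (b - c * a) ^+ 2 + ff1 a * g2.
Proof.
have Hr : \forall t \near (0 : R), 0 < rr t.
  apply: (@near_comp rr 0 (2 * 0 + 2 * c) (fun y => 0 < y) (drr 0)).
  by rewrite rr0; apply: lt_nbhsr; exact: ltr01.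
have P1 : \forall t \near (0:R), is_derive (t:R) 1 gg (gg1 t).
  by move: Hr; apply: filterS => t; exact: dgg.
have P3 : \forall y \near (gg 0 : R), is_derive (y:R) 1 ff (ff1 y).
  rewrite gg0; move: (lt_nbhsr da); apply: filterS => y; exact: ff_d.
have P4 : is_derive (gg 0) 1 ff1 f2 by rewrite gg0; exact: dff1.
rewrite (@chain2 ff ff1 gg gg1 0 f2 g2 P1 dgg1 P3 P4).
by rewrite gg10 gg0 expr2 mulrA.
Qed.
End Comp.
Lemma sum_delta N (i : 'I_N) (F : 'I_N -> R) :
  \sum_(j < N) (j == i)%:R * F j = F i.
Proof.
rewrite (bigD1 i) //= eqxx mul1r big1 ?addr0 // => j /negbTE.
by move=> ->; rewrite mul0r.
Qed.
Lemma sq_shift N (i : 'I_N) (x : 'rV[R]_N) (t : R) :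
  sqnorm (t *: delta_mx 0 i + x) = t * t + 2 * x 0 i * t + sqnorm x.
Proof.
rewrite /sqnorm.
have E : forall j, (t *: delta_mx 0 i + x) 0 j ^+ 2 =
   x 0 j ^+ 2 + (j == i)%:R * (t * t + 2 * x 0 j * t).
  move=> j; rewrite !mxE eqxx /=; case: (j == i) => /=; ring.
under eq_bigr => j _ do rewrite E.
rewrite big_split /= sum_delta; ring.
Qed.
Lemma coord_shift N (i j : 'I_N) (x : 'rV[R]_N) (t : R) :
  (t *: delta_mx 0 i + x) 0 j = t * (j == i)%:R + x 0 j.
Proof. by rewrite !mxE eqxx. Qed.
Lemma lap_term N (x : 'rV[R]_N.+1) (i : 'I_N.+1) (d : R) : sqnorm x = 1 -> d < xlast x ->
 derive (fun y => derive (fun y => expR (- (xlast ((Num.sqrt (sqnorm y))^-1 *: y) - d)^-1)) y (delta_mx 0 i)) x (delta_mx 0 i)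
 = f2 d (xlast x) * ((ord_max == i)%:R - x 0 i * xlast x) ^+ 2
   + ff1 d (xlast x) * g2 (xlast x) (ord_max == i)%:R (x 0 i).
Proof.
move=> nx dx; rewrite red.
have -> : (fun t : R => expR (- (xlast ((Num.sqrt (sqnorm (t *: delta_mx 0 i + x)))^-1 *: (t *: delta_mx 0 i + x)) - d)^-1))
  = (fun t => ff d (gg (xlast x) (ord_max == i)%:R (x 0 i) t)).
  apply/funext => t; rewrite sq_shift nx /xlast mxE coord_shift.
  by rewrite /ff /gg /rr.
exact: psi2.
Qed.
End S.
Arguments lap_term {R N x i d}.
Arguments f2 {R}. Arguments ff1 {R}. Arguments g2 {R}. Arguments gg {R}. Arguments ff {R}.
End Helpers.
Import Helpers.
Local Open Scope ring_scope.
Theorem lemma4p1 (R : realType) (n : nat) :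
  exists2 delta0 : R, 0 < delta0 &
    forall delta : R, 0 < delta -> delta < delta0 ->
    forall x : 'rV[R]_n.+1, sqnorm x = 1 ->
      delta < xlast x -> xlast x < 3 * delta ->
      0 <= sphere_lap (fun y => expR (- (xlast y - delta)^-1)) x.
Proof.
exists ((10 * (n.+1)%:R)^-1); first by rewrite invr_gt0 mulr_gt0 // ltr0n.
move=> d d0 dd0 x nx da da3.
rewrite /sphere_lap /eucl_lap.
under eq_bigr => i _ do rewrite (lap_term nx da).
set A := xlast x in da da3 *.
have xA : x 0 ord_max = A by [].
rewrite big_ord_recr /= eqxx xA.
have T1 : \sum_(i < n) x 0 (widen_ord (leqnSn n) i) ^+ 2 = 1 - A ^+ 2.
  by move: nx; rewrite /sqnorm big_ord_recr /= xA => <-; ring.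
have Hw : forall i : 'I_n, (ord_max == widen_ord (leqnSn n) i) = false.
  move=> i; apply/negbTE; rewrite -val_eqE /= eq_sym neq_ltn ltn_ord //.
under eq_bigr => i _ do rewrite Hw.
rewrite (eq_bigr (fun i => (f2 d A * A^+2 + 3*A*ff1 d A) * x 0 (widen_ord (leqnSn n) i) ^+ 2 - ff1 d A * A)); last by move=> i _; rewrite /g2 /=; ring.
rewrite big_split /= -mulr_sumr T1 sumrN sumr_const card_ord /g2.
rewrite /f2 /ff1.
set E := expR _. set N : R := n%:R.
have E0 : 0 < E by apply: expR_gt0.
have N0 : 0 <= N by rewrite /N ler0n.
have s0 : 0 < A - d by rewrite subr_gt0.
have s0' : A - d != 0 by rewrite gt_eqF.
have hd : d * (10 * (N + 1)) < 1.
  have X0 : 0 < 10 * (N + 1) by lra.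
  by move: dd0; rewrite -[(n.+1)%:R]natr1 -/N -[_^-1]mul1r ltr_pdivlMr.
have h1 : 10 * d < 1 by nra.
have h2 : 10 * (N * d) <= 1 by nra.
have p1 : 1/2 <= 1 - 2 * (A - d) by lra.
have p2 : 1/2 <= 1 - A ^+ 2 by rewrite expr2; nra.
have p12 : 1/4 <= (1 - 2 * (A - d)) * (1 - A ^+ 2) by nra.
have q1 : (A - d) ^+ 2 <= 1 / 25 by rewrite expr2; nra.
have q2 : N * A <= 3 / 10 by nra.
have p3 : N * A * (A - d) ^+ 2 <= 1/4.
  have : 0 <= N * A by nra.
  nra.
have -> : (E * (1 - 2 * (A - d)) / (A - d) ^+ 4 * A ^+ 2 + 3 * A * (E / ((A - d) * (A - d)))) *
  (1 - A ^+ 2) - E / ((A - d) * (A - d)) * A *+ n +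
  (E * (1 - 2 * (A - d)) / (A - d) ^+ 4 * (1 - A * A) ^+ 2 +
   E / ((A - d) * (A - d)) * (3 * A * A ^+ 2 - A - 2 * 1 * A))
  = E / (A - d) ^+ 4 * ((1 - 2 * (A - d)) * (1 - A ^+ 2) - N * A * (A - d) ^+ 2).
  by field.
apply: mulr_ge0; first by apply: divr_ge0; [exact: ltW | apply: exprn_ge0; exact: ltW].
lra.
Qed.
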